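(* For every $n\ge 1$, the map $\Phi=\varphi\circ\Theta$ described below is a bijection from the set of reduced plane trees with $n+1$ leaves onto the set of parking quasi-ribbons of length $n$. (i) Binary trees: a binary tree is either empty or a node with an ordered pair (left subtree, right subtree) of binary trees; $|T|$ is its number of nodes. Define a word $\varphi(T)$ of length $|T|$, each letter being attached to one node: $\varphi(\emptyset)$ is the empty word, and if $T$ has left subtree $T_1$ and right subtree $T_2$, then $$\varphi(T)=\varphi(T_2)\cdot\big(\varphi(T_1)[M-1]\big)\cdot(|T_1|+M),$$ where $M$ is the largest letter of $\varphi(T_2)$ if $T_2\neq\emptyset$ and $M=1$ if $T_2=\emptyset$, $w[k]$ denotes the word obtained by adding $k$ to every letter of $w$, the dot is concatenation, and the final letter $|T_1|+M$ is attached to the root of $T$ (the letters of the first two blocks being attached to the nodes of $T_2$ and $T_1$ as in the recursive construction). (ii) Marked binary trees: a binary tree in which each edge joining a node to its left child is either normal or marked. For such a tree, $\varphi$ of the underlying binary tree is computed, and a bar is inserted immediately before the letter attached to each node whose left edge is marked. (iii) The map $\Theta$ from reduced plane trees to marked binary trees is defined recursively: the single-leaf tree goes to the empty tree; if the root has exactly two children subtrees $T_1,T_2$, $\Theta$ gives a node with left subtree $\Theta(T_1)$ and right subtree $\Theta(T_2)$, the left edge (if any) being normal; if the root has children subtrees $T_1,\dots,T_r$ with $r\ge3$, $\Theta$ gives a node with right subtree $\Theta(T_r)$ and left subtree $\Theta(T')$, joined by a marked left edge, where $T'$ is the tree whose root has children subtrees $T_1,\dots,T_{r-1}$.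
   Context: A reduced plane tree is a rooted plane tree in which every internal vertex has at least two children. A nondecreasing parking function of length $n$ is a word $a_1a_2\cdots a_n$ of positive integers with $a_1\le a_2\le\cdots\le a_n$ and $a_i\le i$ for all $i$. A parking quasi-ribbon of length $n$ is a nondecreasing parking function of length $n$ together with a (possibly empty) set of bars placed between some consecutive letters $a_i,a_{i+1}$, only at positions where $a_i<a_{i+1}$ (for example $11|244|5566|8$). *)

(* Defs.v *)
From mathcomp Require Import all_boot.
Set Implicit Arguments. Unset Strict Implicit. Unset Printing Implicit Defensive.

Inductive ptree := PNode of seq ptree.

Fixpoint leaves (t : ptree) : nat :=
  let: PNode ch := t in
  let fix sumL (s : seq ptree) : nat :=
    match s with [::] => 0 | c :: s' => leaves c + sumL s' end in
  if ch is [::] then 1 else sumL ch.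

Fixpoint reduced (t : ptree) : bool :=
  let: PNode ch := t in
  let fix allR (s : seq ptree) : bool :=
    match s with [::] => true | c :: s' => reduced c && allR s' end in
  ((size ch == 0) || (1 < size ch)) && allR ch.

(* Marked binary trees: [BNode m l r] is a node with left subtree [l],
   right subtree [r]; [m] = true iff the edge to the left child is marked. *)
Inductive btree := BEmpty | BNode of bool & btree & btree.

Fixpoint bsize (t : btree) : nat :=
  match t with BEmpty => 0 | BNode _ l r => (bsize l + bsize r).+1 end.

(* For children T1,...,Tr (r >= 2) this gives
   node(true, ... node(true, node(false, Th T1, Th T2), Th T3) ..., Th Tr),
   which is exactly the recursive definition of the paper unfolded. *)
Fixpoint theta (t : ptree) : btree :=
  let: PNode ch := t in
  let fix aux (acc : btree) (rest : seq ptree) : btree :=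
    match rest with
    | [::] => acc
    | c :: rest' => aux (BNode true acc (theta c)) rest'
    end in
  match ch with
  | t1 :: t2 :: rest => aux (BNode false (theta t1) (theta t2)) rest
  | _ => BEmpty
  end.

(* A quasi-ribbon word: letters paired with a boolean saying whether a bar
   is placed immediately before that letter. *)
Definition qword := seq (nat * bool).

(* phi on marked binary trees: the letter attached to each node comes with
   the mark of its left edge (bar inserted before it iff marked). *)
Fixpoint phi (t : btree) : qword :=
  match t with
  | BEmpty => [::]
  | BNode m l r =>
      let w2 := phi r in
      let w1 := phi l in
      let M := if w2 is [::] then 1 else \max_(x <- unzip1 w2) x in
      w2 ++ [seq (x.1 + (M - 1), x.2) | x <- w1] ++ [:: (bsize l + M, m)]
  end.

Definition Phi (t : ptree) : qword := phi (theta t).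

(* Parking quasi-ribbons of length n (letters a_1..a_n stored at indices
   0..n-1; bar before letter of index i allowed only for i > 0 with
   a_{i-1} < a_i). *)
Definition parking_quasi_ribbon (n : nat) (q : qword) : Prop :=
  let w := unzip1 q in
  let b := unzip2 q in
  [/\ size q = n,
      sorted leq w,
      (forall i, i < n -> 1 <= nth 0 w i <= i.+1)
    & (forall i, i < n -> nth false b i -> 0 < i /\ nth 0 w i.-1 < nth 0 w i)].

(* Main.v *)
Require Import Defs.
From mathcomp Require Import all_boot zify.
Set Implicit Arguments. Unset Strict Implicit.

Definition lst (p : nat) (q : qword) := last p (unzip1 q).

Fixpoint qr (c : bool) (k p : nat) (q : qword) : bool :=
  match q with
  | [::] => true
  | (x, m) :: q' => [&& p <= x, x <= k, (c && m) ==> (p < x) & qr c k.+1 x q']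
  end.

Lemma qr_cat c s1 s2 k p :
  qr c k p (s1 ++ s2) = qr c k p s1 && qr c (k + size s1) (lst p s1) s2.
Proof.
elim: s1 k p => [|[x m] s1 IH] k p /=; first by rewrite addn0.
by rewrite IH addSnnS /lst /= !andbA.
Qed.

Lemma qr1 c k p x m : qr c k p [:: (x, m)] = [&& p <= x, x <= k & (c && m) ==> (p < x)].
Proof. by rewrite /= andbT. Qed.

Lemma qr_mono c s k k' p : qr c k p s -> k <= k' -> qr c k' p s.
Proof.
elim: s k k' p => [|[x m] s IH] k k' p //= /and4P[h1 h2 h3 h4] hk.
rewrite h1 h3 (leq_trans h2 hk) /=; exact: IH h4 _.
Qed.

Lemma lst_lt c s k p : qr c k p s -> 0 < size s -> lst p s < k + size s.
Proof.
elim: s k p => [|[x m] s IH] k p //= /and4P[h1 h2 h3 h4] _.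
rewrite /lst /=; case: s IH h4 => [|y s] IH h4 /=; first by lia.
have := IH _ _ h4 isT; rewrite /lst /=; lia.
Qed.

Lemma lst_le c s k p : qr c k p s -> p <= k -> lst p s <= k + size s.
Proof.
case: s => [|y s] h hp; first by rewrite addn0.
by apply: ltnW; apply: lst_lt h _.
Qed.

Lemma lst_ge c s k p : qr c k p s -> p <= lst p s.
Proof.
elim: s k p => [|[x m] s IH] k p //= /and4P[h1 h2 h3 h4].
rewrite /lst /=; exact: leq_trans h1 (IH _ _ h4).
Qed.

Lemma qr_all c s k p : qr c k p s -> all (leq p) (unzip1 s).
Proof.
elim: s k p => [|[x m] s IH] k p //= /and4P[h1 h2 h3 h4].
rewrite h1 /=; apply: sub_all (IH _ _ h4) => y; exact: leq_trans.
Qed.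

Lemma max_lst c s k p : qr c k p s -> 0 < size s -> \max_(x <- unzip1 s) x = lst p s.
Proof.
elim: s k p => [|[x m] s IH] k p //= /and4P[h1 h2 h3 h4] _.
rewrite big_cons /lst /=; case: s IH h4 => [|y s] IH h4; first by rewrite big_nil maxn0.
rewrite (IH _ _ h4 isT); apply/maxn_idPr; by have := lst_ge h4.
Qed.

Lemma lst_cat p s1 s2 : lst p (s1 ++ s2) = lst (lst p s1) s2.
Proof. by rewrite /lst /unzip1 map_cat last_cat. Qed.
Lemma lst1 p x m : lst p [:: (x, m)] = x.
Proof. by []. Qed.
Lemma lst0 p : lst p [::] = p.
Proof. by []. Qed.
Fixpoint phiB (b : nat) (t : btree) : qword :=
  match t with
  | BEmpty => [::]
  | BNode m l r =>
      let w2 := phiB b r in let M := lst b w2 in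
      w2 ++ phiB M l ++ [:: (bsize l + M, m)]
  end.

Fixpoint good (t : btree) : bool :=
  match t with
  | BEmpty => true
  | BNode m l r => [&& ~~ m || (0 < bsize l), good l & good r]
  end.

Lemma phiB_fwd c t b : (c ==> good t) -> qr c b b (phiB b t) /\ size (phiB b t) = bsize t.
Proof.
elim: t b => [|m l IHl r IHr] b //= hg.
have gl : c ==> good l by apply/implyP => /(implyP hg)/and3P[].
have gr : c ==> good r by apply/implyP => /(implyP hg)/and3P[].
have gm : c && m -> 0 < bsize l by move=> /andP[hc hm]; move: (implyP hg hc); rewrite hm => /and3P[].
have [q2 s2] := IHr b gr.
set w2 := phiB b r in q2 s2 *; set M := lst b w2.
have [q1 s1] := IHl M gl.
have hM : M <= b + size w2 by apply: lst_le q2 _.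
rewrite !size_cat /= s1 s2 qr_cat q2 /= qr_cat (qr_mono q1 hM) /= -/M s1 andbT.
have h1 := lst_le q1 (leqnn M).
rewrite s1 in h1.
split; last by lia.
apply/and3P; split; [lia|lia|].
apply/implyP => hcm; have := lst_lt q1; rewrite s1 => /(_ (gm hcm)); lia.
Qed.

Lemma split_ex c b u L : qr c b b u -> lst b u <= L -> L <= b + size u ->
  exists u1 u2, [/\ u = u1 ++ u2, qr c (lst b u1) (lst b u1) u2 & size u2 + lst b u1 = L].
Proof.
elim/last_ind: u L => [|u [a m] IH] L.
  move=> _ h1 h2; exists [::], [::]; split => //=; rewrite /lst /= in h1 h2 *; lia.
rewrite -cats1 qr_cat qr1 lst_cat lst1 => /andP[hu /and3P[ha1 ha2 ha3]] hL1.
rewrite size_cat /= => hL2.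
have [->|ne] := eqVneq a L.
  by exists (u ++ [:: (L, m)]), [::]; split; rewrite ?cats0 ?lst_cat ?lst1.
have [u1 [u2 [e q2 s2]]] := IH L.-1 hu ltac:(lia) ltac:(lia).
exists u1, (u2 ++ [:: (a, m)]); split.
- by rewrite e catA.
- rewrite qr_cat q2 qr1 /=.
  have e2 : lst (lst b u1) u2 = lst b u by rewrite e lst_cat.
  rewrite e2 ha1 ha3 /=; lia.
- rewrite size_cat /=; lia.
Qed.

Lemma split_uniq1 c b w2 w1 w2' w1' :
  qr c (lst b w2) (lst b w2) w1 ->
  w2 ++ w1 = w2' ++ w1' -> size w1 + lst b w2 = size w1' + lst b w2' ->
  size w2 <= size w2' -> w2 = w2'.
Proof.
move=> q1 e es hs.
have ez : size w2 + size w1 = size w2' + size w1' by rewrite -!size_cat e.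
have et : w2' = w2 ++ take (size w2' - size w2) w1.
  by move: (take_size_cat w1' (erefl (size w2'))); rewrite -e take_cat ltnNge hs /= => /esym.
have ed : w1' = drop (size w2' - size w2) w1.
  by move: (drop_size_cat w1' (erefl (size w2'))); rewrite -e drop_cat ltnNge hs /= => /esym.
set d := size w2' - size w2 in et ed.
case: (posnP d) => hd.
  by rewrite et hd take0 cats0.
exfalso.
have q1' := q1; rewrite -(cat_take_drop d w1) qr_cat in q1'.
case/andP: q1' => qx _.
have sx : size (take d w1) = d by rewrite size_take; case: ltnP => //; lia.
have := lst_lt qx; rewrite sx => /(_ hd).
have : lst b w2' = lst (lst b w2) (take d w1) by rewrite et lst_cat.
move: es; rewrite ed size_drop; lia.
Qed.

Lemma split_uniq c b w2 w1 w2' w1' :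
  qr c (lst b w2) (lst b w2) w1 -> qr c (lst b w2') (lst b w2') w1' ->
  w2 ++ w1 = w2' ++ w1' -> size w1 + lst b w2 = size w1' + lst b w2' -> w2 = w2'.
Proof.
move=> q1 q1' e es; case: (leqP (size w2) (size w2')) => h.
  exact: split_uniq1 q1 e es h.
by symmetry; apply: split_uniq1 q1' (esym e) (esym es) (ltnW h).
Qed.

Lemma phiB_inj t t' b : good t -> good t' -> phiB b t = phiB b t' -> t = t'.
Proof.
elim: t t' b => [|m l IHl r IHr] [|m' l' r'] b //=.
- by move=> _ _ /(f_equal size); rewrite !size_cat /=; lia.
- by move=> _ _ /(f_equal size); rewrite !size_cat /=; lia.
move=> /and3P[_ gl gr] /and3P[_ gl' gr'].
rewrite !catA !cats1 => /rcons_inj [e2 eL em].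
have [q2 _] := phiB_fwd (c := true) b gr.
have [q2' _] := phiB_fwd (c := true) b gr'.
have [q1 s1] := phiB_fwd (c := true) (lst b (phiB b r)) gl.
have [q1' s1'] := phiB_fwd (c := true) (lst b (phiB b r')) gl'.
have ew := split_uniq q1 q1' e2 ltac:(rewrite s1 s1'; lia).
have er := IHr r' b gr gr' ew; subst r' m'.
move: e2 => /(f_equal (drop (size (phiB b r)))); rewrite !drop_size_cat //.
by move=> /(IHl l' _ gl gl') ->.
Qed.

Lemma phiB_ex n c b q : size q <= n -> qr c b b q -> exists t, (c ==> good t) /\ phiB b t = q.
Proof.
elim: n b q => [|n IH] b q.
  by case: q => [|x q] //= _ _; exists BEmpty; rewrite implybT.
case/lastP: q => [|u [L m]] hs hq; first by exists BEmpty; rewrite implybT.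
move: hq; rewrite -cats1 qr_cat qr1 => /andP[hu /and3P[h1 h2 h3]].
rewrite size_rcons in hs.
have [u1 [u2 [e q2 s2]]] := split_ex hu h1 h2.
have q1 : qr c b b u1 by move: hu; rewrite e qr_cat => /andP[].
have [r [gr er]] := IH b u1 ltac:(move: hs; rewrite e size_cat; lia) q1.
have [l [gl el]] := IH (lst b u1) u2 ltac:(move: hs; rewrite e size_cat; lia) q2.
exists (BNode m l r); split.
- case: c h3 gr gl {hu q1 q2 IH} => //= h3 gr gl; rewrite gr gl !andbT.
  case: m h3 => //= h3; case: (posnP (bsize l)) => // hl0.
  have := phiB_fwd (c := false) (lst b u1) (t := l) isT.
  rewrite hl0 el => -[_] /size0nil u20; move: h3 s2.
  rewrite e u20 cats0 /= => h3; lia.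
- rewrite /= er el e catA.
  have := phiB_fwd (c := false) (lst b u1) (t := l) isT; rewrite el => -[_ <-].
  by rewrite s2.
Qed.

Lemma map_shift0 (s : qword) : [seq (x.1 + 0, x.2) | x <- s] = s.
Proof. by elim: s => //= [[a c] s ->]; rewrite addn0. Qed.

Lemma phi_shift t k : [seq (x.1 + k, x.2) | x <- phi t] = phiB k.+1 t.
Proof.
elim: t k => [|m l IHl r IHr] k //=.
have er : phi r = phiB 1 r by rewrite -(IHr 0) map_shift0.
have [q2 _] := phiB_fwd (c := false) 1 (t := r) isT.
set M := (if phi r is [::] then 1 else _).
have eM : M = lst 1 (phi r).
  rewrite /M; case E: (phi r) => [|y s] //.
  by rewrite -E er (max_lst q2) // -er E.
have M1 : 1 <= M by rewrite eM er; exact: lst_ge q2.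
have eM' : lst k.+1 (phiB k.+1 r) = M + k.
  rewrite -IHr eM /lst /unzip1 -map_comp.
  have -> : [seq (fst \o (fun x : nat * bool => (x.1 + k, x.2))) i | i <- phi r] = [seq addn^~ k i | i <- [seq i.1 | i <- phi r]].
    by rewrite -map_comp.
  by rewrite -[k.+1]/((addn^~ k) 1) last_map.
rewrite !map_cat IHr -map_comp /= eM'.
have -> : [seq ((fun x : nat * bool => (x.1 + k, x.2)) \o (fun x : nat * bool => (x.1 + (M - 1), x.2))) i | i <- phi l] = [seq (x.1 + (M - 1 + k), x.2) | x <- phi l].
  by apply: eq_map => -[a c] /=; rewrite addnA.
rewrite IHl; congr (_ ++ (_ ++ _)).
- by congr phiB; lia.
- by congr [:: (_, _)]; lia.
Qed.

Lemma PhiE T : Phi T = phiB 1 (theta T).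
Proof. by rewrite /Phi -phi_shift map_shift0. Qed.

Lemma qr_nth c k p q : qr c k p q <-> forall i, i < size q ->
  [/\ nth p (p :: unzip1 q) i <= nth 0 (unzip1 q) i, nth 0 (unzip1 q) i <= k + i
    & (c && nth false (unzip2 q) i) ==> (nth p (p :: unzip1 q) i < nth 0 (unzip1 q) i)].
Proof.
elim: q k p => [|[x m] q IH] k p /=; first by split.
split.
- move=> /and4P[h1 h2 h3 h4] [|i] /=; first by rewrite addn0 h1 h2 h3.
  rewrite ltnS => hi; have [] := (proj1 (IH _ _) h4 i hi).
  have hi' : i < size (x :: unzip1 q) by rewrite /= size_map ltnW.
  rewrite (set_nth_default x p hi') addSnnS => *; by split.
- move=> H; have [h1 h2 h3] := H 0 isT; rewrite addn0 /= in h1 h2 h3.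
  rewrite h1 h2 h3 /=; apply/IH => i hi.
  have [] := H i.+1 hi.
  have hi' : i < size (x :: unzip1 q) by rewrite /= size_map ltnW.
  rewrite /= (set_nth_default x p hi') addSnnS => *; by split.
Qed.

Lemma pqr_qr n q : parking_quasi_ribbon n q <-> size q = n /\ qr true 1 1 q.
Proof.
rewrite /parking_quasi_ribbon; split.
- case=> hs hso hb hbar; split => //; apply/qr_nth => i hi.
  rewrite hs in hi; have [hb1 hb2] := andP (hb i hi).
  have hprev : 0 < i -> nth 1 (1 :: unzip1 q) i = nth 0 (unzip1 q) i.-1.
    case: i hi {hb1 hb2} => // i hi _ /=; apply: set_nth_default; rewrite size_map hs; lia.
  split.
  + case: i hi hb1 hb2 hprev => [|i] hi hb1 hb2 hprev //.
    rewrite hprev //=; move/(sortedP 0): hso => /(_ i); apply; rewrite size_map hs; exact: hi.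
  + by rewrite add1n.
  + apply/implyP => /= hbi; have [h0 hlt] := hbar i hi hbi; by rewrite hprev.
- case=> hs /qr_nth H; split => //.
  + apply/(sortedP 0) => i; rewrite size_map => hi.
    have [h1 _ _] := H i.+1 hi; move: h1 => /=.
    by rewrite (set_nth_default 0 1) // size_map ltnW.
  + move=> i hi; rewrite -hs in hi; have [_ h2 _] := H i hi.
    rewrite -add1n h2 andbT.
    have := qr_all (proj2 (qr_nth _ _ _ _) H).
    by move/all_nthP => /(_ 0 i); rewrite size_map => /(_ hi).
  + move=> i hi hbi; rewrite -hs in hi; have [_ h2 h3] := H i hi.
    rewrite hbi /= in h3; case: i hi hbi h2 h3 => [|i] hi hbi h2 h3 /=.
      by move: h2 h3 => /=; lia.
    split => //; move: h3 => /=; rewrite (set_nth_default 0 1) // size_map; lia.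
Qed.

Section PT.
Fixpoint ptree_ind2 (P : ptree -> Prop)
  (H : forall ch, List.Forall P ch -> P (PNode ch)) (t : ptree) : P t :=
  match t with
  | PNode ch => H ch ((fix f (s : seq ptree) : List.Forall P s :=
      match s with [::] => List.Forall_nil _
      | c :: s' => List.Forall_cons _ (ptree_ind2 H c) (f s') end) ch)
  end.
End PT.

Fixpoint auxT (acc : btree) (rest : seq ptree) : btree :=
  match rest with [::] => acc | c :: rest' => auxT (BNode true acc (theta c)) rest' end.

Lemma thetaE t1 t2 rest : theta (PNode [:: t1, t2 & rest]) = auxT (BNode false (theta t1) (theta t2)) rest.
Proof. by []. Qed.

Lemma auxT_rcons rest acc c : auxT acc (rcons rest c) = BNode true (auxT acc rest) (theta c).
Proof. by elim: rest acc => //= c' rest IH acc; rewrite IH. Qed.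

Lemma leavesE ch : leaves (PNode ch) = if ch is [::] then 1 else sumn (map leaves ch).
Proof.
case: ch => //= c s; congr (_ + _); by elim: s => //= c' s ->.
Qed.

Lemma reducedE ch : reduced (PNode ch) = ((size ch == 0) || (1 < size ch)) && all reduced ch.
Proof.
rewrite /=; congr (_ && _); by elim: ch => //= c' s ->.
Qed.

Lemma theta_rcons s x : 1 < size s -> theta (PNode (rcons s x)) = BNode true (theta (PNode s)) (theta x).
Proof. case: s => [|a [|b s]] // _; by rewrite !rcons_cons !thetaE auxT_rcons. Qed.

Lemma theta_cases ch : reduced (PNode ch) ->
  [\/ ch = [::] /\ theta (PNode ch) = BEmpty,
      exists t1 t2, [/\ ch = [:: t1; t2], reduced t1, reduced t2 &
                        theta (PNode ch) = BNode false (theta t1) (theta t2)]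
    | exists ch0 c, [/\ ch = rcons ch0 c, 1 < size ch0, reduced (PNode ch0), reduced c &
                        theta (PNode ch) = BNode true (theta (PNode ch0)) (theta c)]].
Proof.
case: ch => [|t1 [|t2 rest]] hr; first by apply: Or31.
  by rewrite reducedE in hr.
move: hr; rewrite reducedE => /andP[_ /and3P[r1 r2 rr]].
case/lastP: rest rr => [|rest c] rr.
  by apply: Or32; exists t1, t2.
apply: Or33; exists [:: t1, t2 & rest], c.
move: (rr : all reduced (rcons rest c)); rewrite all_rcons => /andP[rc {}rr].
split => //.
- by rewrite reducedE /= r1 r2 rr.
- by rewrite !thetaE auxT_rcons.
Qed.

Lemma theta_inj t T T' : reduced T -> reduced T' -> theta T = t -> theta T' = t -> T = T'.
Proof.
elim: t T T' => [|m l IHl r IHr] [ch] [ch'] hT hT'.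
- case: (theta_cases hT) => [[-> _]|[? [? [_ _ _ ->]]]|[? [? [_ _ _ _ ->]]]] //.
  by case: (theta_cases hT') => [[-> _]|[? [? [_ _ _ ->]]]|[? [? [_ _ _ _ ->]]]].
- case: (theta_cases hT) => [[_ ->]//|[t1 [t2 [-> r1 r2 ->]]]|[ch0 [c [-> s0 r0 rc ->]]]];
  case: (theta_cases hT') => [[_ ->]//|[t1' [t2' [-> r1' r2' ->]]]|[ch0' [c' [-> s0' r0' rc' ->]]]];
  move=> [em e1 e2] [em' e1' e2']; rewrite -em' in em; try discriminate em.
  + by rewrite (IHl _ _ r1 r1' e1 e1') (IHr _ _ r2 r2' e2 e2').
  + by have [->] := IHl _ _ r0 r0' e1 e1'; rewrite (IHr _ _ rc rc' e2 e2').
Qed.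

Lemma Forall_red (Q : ptree -> Prop) s : List.Forall (fun c => reduced c -> Q c) s -> all reduced s -> List.Forall Q s.
Proof.
elim: s => //= c s IH H /andP[rc rs]; inversion H; constructor; auto.
Qed.

Lemma auxT_fwd rest acc : 0 < bsize acc -> good acc ->
  List.Forall (fun c => good (theta c) /\ (bsize (theta c)).+1 = leaves c) rest ->
  good (auxT acc rest) /\ bsize (auxT acc rest) = bsize acc + sumn (map leaves rest).
Proof.
elim: rest acc => [|c rest IH] acc /= h0 hg H; first by rewrite addn0.
inversion H as [|? ? [gc lc] Hr]; subst.
have [g' s'] := IH (BNode true acc (theta c)) isT ltac:(by rewrite /= h0 hg gc) Hr.
split => //; rewrite s' /= -lc; lia.
Qed.

Lemma theta_fwd T : reduced T -> good (theta T) /\ (bsize (theta T)).+1 = leaves T.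
Proof.
elim/ptree_ind2: T => ch H hr.
have HF := Forall_red H (proj2 (andP (eqbRL (reducedE ch) hr))).
move: hr; rewrite reducedE leavesE.
case: ch H HF => [|t1 [|t2 rest]] //= H HF _.
inversion HF as [|? ? [g1 l1] HF1]; subst.
inversion HF1 as [|? ? [g2 l2] HF2]; subst.
have [g s] := auxT_fwd (acc := BNode false (theta t1) (theta t2)) isT ltac:(by rewrite /= g1 g2) HF2.
split => //; rewrite s /= -l1 -l2; lia.
Qed.

Lemma theta_ex t : good t -> exists T, reduced T /\ theta T = t.
Proof.
elim: t => [|m l IHl r IHr]; first by exists (PNode [::]).
move=> /= /and3P[hm gl gr].
have [Tl [rl el]] := IHl gl; have [Tr [rr er]] := IHr gr.
case: m hm => /= hm.
- case: Tl rl el => ch rl el.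
  case: (theta_cases rl) => [[_ e]|[t1 [t2 [e1 r1 r2 e]]]|[ch0 [c [e1 s0 r0 rc e]]]].
  + by move: hm; rewrite -el e.
  + exists (PNode [:: t1; t2; Tr]); split.
    * by rewrite reducedE /= r1 r2 rr.
    * by rewrite thetaE /= -el -er e1.
  + exists (PNode (rcons (rcons ch0 c) Tr)); split.
    * rewrite reducedE all_rcons rr /=; move: rl; rewrite e1 reducedE => /andP[_ ->].
      by rewrite !size_rcons andbT.
    * by rewrite -el -er e1 theta_rcons // size_rcons ltnW.
- exists (PNode [:: Tl; Tr]); split.
  + by rewrite reducedE /= rl rr.
  + by rewrite thetaE /= el er.
Qed.

Theorem mainTheorem3 (n : nat) : 1 <= n ->
  [/\ (forall T : ptree, reduced T -> leaves T = n.+1 ->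
         parking_quasi_ribbon n (Phi T)),
      (forall T1 T2 : ptree, reduced T1 -> reduced T2 ->
         leaves T1 = n.+1 -> leaves T2 = n.+1 -> Phi T1 = Phi T2 -> T1 = T2)
    & (forall q : qword, parking_quasi_ribbon n q ->
         exists T : ptree, [/\ reduced T, leaves T = n.+1 & Phi T = q])].
Proof.
move=> _; split.
- move=> T hr hl; have [g s] := theta_fwd hr.
  have [q sz] := phiB_fwd (c := true) 1 (t := theta T) g.
  apply/pqr_qr; rewrite PhiE sz; split => //; lia.
- move=> T1 T2 r1 r2 _ _; rewrite !PhiE => e.
  have [g1 _] := theta_fwd r1; have [g2 _] := theta_fwd r2.
  exact: theta_inj r1 r2 (phiB_inj g1 g2 e) erefl.
- move=> q /pqr_qr [hs hq].
  have [t [g e]] := phiB_ex (leqnn _) hq.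
  have [T [hr eT]] := theta_ex g.
  exists T; split => //.
  + have [_ s] := theta_fwd hr; rewrite -s eT -hs -e.
    by have [_ ->] := phiB_fwd (c := false) 1 (t := t) isT.
  + by rewrite PhiE eT.
Qed.
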